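(* Fix $1<p<\infty$. Let $X$ and $Y$ be Banach spaces such that $X$ has the approximation property and $\mathcal A(X,Y)\subsetneq\mathcal K(X,Y)$, and suppose there is a linear isomorphism $V:X\to X\oplus X$. Let $Z_p:=\big(\bigoplus_{j=0}^\infty X_j\big)_{\ell^p}$ with $X_0=Y$ and $X_j=X$ for $j\ge1$, and for $\emptyset\neq A\subsetneq\mathbb N$ let \[ \mathcal I_A:=\{S\in\mathcal K(Z_p): P_0SJ_0\in\mathcal A(Y),\ P_0SJ_k\in\mathcal A(X,Y)\text{ for all }k\in A\}. \] Write $[r]=\{1,\ldots,r\}$ and $[r]^c=\mathbb N\setminus[r]$. Then for all $r,s\in\mathbb N$: (a) $\mathcal I_{[r]}$ and $\mathcal I_{[s]}$ are isomorphic as Banach algebras; (b) $\mathcal I_{[r]^c}$ and $\mathcal I_{[s]^c}$ are isomorphic as Banach algebras.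
   Context: $\mathbb N=\{1,2,3,\ldots\}$. For Banach spaces $E,F$, $\mathcal K(E,F)$ denotes the compact operators and $\mathcal A(E,F)$ the operator-norm closure of the finite-rank operators $E\to F$; $\mathcal A(E)=\mathcal A(E,E)$. $P_m:Z_p\to X_m$ and $J_n:X_n\to Z_p$ ($m,n\ge0$) are the natural coordinate projections and inclusions. *)

(* Defs.v *)
From mathcomp Require Import all_boot all_order all_algebra.
From mathcomp Require Import all_classical all_reals all_analysis.
Set Implicit Arguments. Unset Strict Implicit. Unset Printing Implicit Defensive.
Import Order.TTheory GRing.Theory Num.Theory.
Import numFieldNormedType.Exports.
Local Open Scope classical_set_scope.
Local Open Scope ring_scope.

Definition is_linear (R : realType) (E F : normedModType R) (T : E -> F) :=
  forall (a : R) (u v : E), T (a *: u + v) = a *: T u + T v.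

Definition bdd_op (R : realType) (E F : normedModType R) (T : E -> F) :=
  is_linear T /\ continuous T.

Definition finite_rank (R : realType) (E F : normedModType R) (T : E -> F) :=
  exists (n : nat) (e : 'I_n -> F),
    forall x, exists c : 'I_n -> R, T x = \sum_(i < n) c i *: e i.

Definition in_A (R : realType) (E F : normedModType R) (T : E -> F) :=
  bdd_op T /\
  forall eps : R, 0 < eps -> exists F0 : E -> F,
    bdd_op F0 /\ finite_rank F0 /\ forall x, `|T x - F0 x| <= eps * `|x|.

Definition in_K (R : realType) (E F : normedModType R) (T : E -> F) :=
  bdd_op T /\ compact (closure (T @` closed_ball (0 : E) 1)).

Definition approx_prop (R : realType) (E : normedModType R) :=
  forall K : set E, compact K -> forall eps : R, 0 < eps ->
    exists T : E -> E, bdd_op T /\ finite_rank T /\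
      forall x, K x -> `|T x - x| < eps.

(* ambient space: a point (y, x) represents the sequence (y, x 0, x 1, ...),
   i.e. coordinate j >= 1 of Z_p (in X_j = X) is x (j-1). *)
Definition seqE (R : realType) (X Y : normedModType R) :=
  (Y * (nat -> X))%type.

Definition lpsum (R : realType) (X Y : normedModType R) (p : R)
    (z : seqE X Y) : \bar R :=
  ((`|z.1| `^ p)%:E + \sum_(k <oo) (`|z.2 k| `^ p)%:E)%E.

Definition inZ (R : realType) (X Y : normedModType R) (p : R) :
  pred (seqE X Y) := fun z => (lpsum p z < +oo)%E.

Definition Zp (R : realType) (X Y : normedModType R) (p : R) :=
  {z : seqE X Y | inZ p z}.

Definition znorm (R : realType) (X Y : normedModType R) (p : R)
    (z : Zp X Y p) : R :=
  fine (lpsum p (val z)) `^ p^-1.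

Definition zdist (R : realType) (X Y : normedModType R) (p : R)
    (z w : Zp X Y p) : R :=
  fine (lpsum p (val z - val w)) `^ p^-1.

Definition zop (R : realType) (X Y : normedModType R) (p : R) :=
  Zp X Y p -> Zp X Y p.

Definition zlinear (R : realType) (X Y : normedModType R) (p : R)
    (S : zop X Y p) :=
  (forall z1 z2 z3 : Zp X Y p, val z3 = val z1 + val z2 ->
      val (S z3) = val (S z1) + val (S z2)) /\
  (forall (a : R) (z1 z2 : Zp X Y p), val z2 = a *: val z1 ->
      val (S z2) = a *: val (S z1)).

Definition zopbound (R : realType) (X Y : normedModType R) (p : R)
    (S : zop X Y p) (c : R) :=
  forall z, znorm (S z) <= c * znorm z.

Definition zbounded (R : realType) (X Y : normedModType R) (p : R)
    (S : zop X Y p) := exists c : R, zopbound S c.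

Definition zcompact (R : realType) (X Y : normedModType R) (p : R)
    (S : zop X Y p) :=
  forall u : nat -> Zp X Y p, (exists M : R, forall n, znorm (u n) <= M) ->
    exists (phi : nat -> nat) (w : Zp X Y p),
      {homo phi : m n / (m < n)%N >-> (m < n)%N} /\
      (fun n => zdist (S (u (phi n))) w) @ \oo --> (0 : R).

Definition in_KZ (R : realType) (X Y : normedModType R) (p : R)
    (S : zop X Y p) := [/\ zlinear S, zbounded S & zcompact S].

Definition J0raw (R : realType) (X Y : normedModType R) (y : Y) : seqE X Y :=
  (y, fun _ => 0).
Definition Jraw (R : realType) (X Y : normedModType R) (k : nat) (x : X) :
  seqE X Y := (0, fun n => if n == k.-1 then x else 0).

(* P_0 S J_0 : Y -> Y and P_0 S J_k : X -> Y (k >= 1).  The vectors J_0 y,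
   J_k x always lie in Z_p; insub packages them as elements of Zp. *)
Definition P0SJ0 (R : realType) (X Y : normedModType R) (p : R)
    (S : zop X Y p) (y : Y) : Y :=
  oapp (fun z : Zp X Y p => (val (S z)).1) 0 (insub (J0raw X y)).
Definition P0SJ (R : realType) (X Y : normedModType R) (p : R)
    (S : zop X Y p) (k : nat) (x : X) : Y :=
  oapp (fun z : Zp X Y p => (val (S z)).1) 0 (insub (Jraw Y k x)).

Definition in_I (R : realType) (X Y : normedModType R) (p : R)
    (A : set nat) (S : zop X Y p) :=
  [/\ in_KZ S, in_A (P0SJ0 S) &
      forall k, A k -> in_A (P0SJ S k)].

Definition banach_alg_iso (R : realType) (X Y : normedModType R) (p : R)
    (I I' : set (zop X Y p)) (Phi Psi : zop X Y p -> zop X Y p) :=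
  (forall S, I S -> I' (Phi S)) /\
      (forall T, I' T -> I (Psi T)) /\
      (forall S, I S -> Psi (Phi S) = S) /\
      (forall T, I' T -> Phi (Psi T) = T) /\
      (forall S T U, I S -> I T -> I U ->
         (forall z, val (U z) = val (S z) + val (T z)) ->
         forall z, val (Phi U z) = val (Phi S z) + val (Phi T z)) /\
      (forall (a : R) S U, I S -> I U ->
         (forall z, val (U z) = a *: val (S z)) ->
         forall z, val (Phi U z) = a *: val (Phi S z)) /\
      (forall S T, I S -> I T -> Phi (S \o T) = Phi S \o Phi T) /\
      (exists C : R, forall S c, I S -> zopbound S c -> zopbound (Phi S) (C * c)) /\
      (exists C : R, forall T c, I' T -> zopbound T c -> zopbound (Psi T) (C * c)).

Definition banach_alg_isomorphic (R : realType) (X Y : normedModType R)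
    (p : R) (I I' : set (zop X Y p)) :=
  exists Phi Psi, banach_alg_iso I I' Phi Psi.

(* Main.v *)
Require Import Defs.

From mathcomp Require Import all_boot all_order all_algebra.
From mathcomp Require Import all_classical all_reals all_analysis.
From HB Require Import structures.
From mathcomp Require Import ring lra zify.

Set Implicit Arguments. Unset Strict Implicit. Unset Printing Implicit Defensive.
Import Order.TTheory GRing.Theory Num.Theory.
Import numFieldNormedType.Exports.
Local Open Scope classical_set_scope.
Local Open Scope ring_scope.
Local Notation ZZ := Defs.Zp.
Section Gen.
Variables (R : realType) (p : R) (X Y : normedModType R).
Hypothesis hp : 1 < p.

Definition nrm (d : seqE X Y) : R := fine (lpsum p d) `^ p^-1.

Lemma ep_ge0 (E : normedModType R) (x : E) : (0 <= (`|x| `^ p)%:E)%E.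
Proof. by rewrite lee_fin powR_ge0. Qed.

Lemma lpsum_ge0 (z : seqE X Y) : (0 <= lpsum p z)%E.
Proof.
rewrite /lpsum adde_ge0 ?ep_ge0 //; apply: nneseries_ge0 => n _ _; exact: ep_ge0.
Qed.

Lemma lpsum_fin {z : seqE X Y} : (lpsum p z < +oo)%E -> lpsum p z \is a fin_num.
Proof. by rewrite ge0_fin_numE ?lpsum_ge0. Qed.

Lemma fine_bound (F : seqE X Y -> seqE X Y) (K : R) : 0 < K ->
  (forall d, (lpsum p (F d) <= K%:E * lpsum p d)%E) ->
  forall d, (lpsum p d = +oo -> lpsum p (F d) = +oo)%E ->
  fine (lpsum p (F d)) <= K * fine (lpsum p d).
Proof.
move=> K0 HF d Hoo.
have [fd|] := boolP (lpsum p d < +oo)%E.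
  have fin := lpsum_fin fd.
  have fFd : lpsum p (F d) \is a fin_num.
    apply: lpsum_fin; apply: le_lt_trans (HF d) _.
    by apply: lte_mul_pinfty => //; rewrite lee_fin ltW.
  have -> : K * fine (lpsum p d) = fine (K%:E * lpsum p d) by rewrite fineM.
  by rewrite fine_le // ?fin_numM.
rewrite -leNgt leye_eq => /eqP dinf; rewrite dinf Hoo //=.
by rewrite mulr0.
Qed.

Lemma nrm_bound (F : seqE X Y -> seqE X Y) (K : R) : 0 < K ->
  (forall d, (lpsum p (F d) <= K%:E * lpsum p d)%E) ->
  forall d, (lpsum p d = +oo -> lpsum p (F d) = +oo)%E ->
  nrm (F d) <= K `^ p^-1 * nrm d.
Proof.
move=> K0 HF d Hoo.
have hK : 0 <= K := ltW K0.
have h1 : 0 <= fine (lpsum p d) := fine_ge0 (lpsum_ge0 d).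
rewrite /nrm -(powRM _ hK h1).
apply: ge0_ler_powR.
- rewrite invr_ge0; exact: le_trans ler01 (ltW hp).
- rewrite nnegrE; exact/fine_ge0/lpsum_ge0.
- by rewrite nnegrE mulr_ge0.
- exact: fine_bound.
Qed.

Lemma nrm_ge0 (d : seqE X Y) : 0 <= nrm d.
Proof. exact: powR_ge0. Qed.

Lemma eser_rec (f : nat -> \bar R) : (forall i, 0 <= f i)%E ->
  (\sum_(k <oo) f k = f 0%N + \sum_(k <oo) f k.+1)%E.
Proof.
move=> f0; rewrite (nneseries_split 0 1) // add0n big_nat1.
congr (_ + _)%E; rewrite -nneseries_addn //.
by apply: eq_eseriesr => k _; rewrite addn1.
Qed.
End Gen.

Section LB.
Variables (R : realType) (E F : normedModType R) (f : E -> F).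
Hypothesis hf : is_linear f.
Definition fL := f.
HB.instance Definition _ := GRing.isLinear.Build R E F *:%R fL hf.
Lemma lin_bound_aux : continuous f -> exists C : R, 0 < C /\ forall x, `|f x| <= C * `|x|.
Proof.
move=> cf.
have : bounded_near fL (nbhs 0) by apply/linear_bounded_continuous.
move=> /linear_boundedP [M [_ HM]].
exists (Num.max M 0 + 1); split; first by rewrite ltr_wpDl // le_max lexx orbT.
apply: HM; have h1 : M <= Num.max M 0 by rewrite le_max lexx.
by rewrite (le_lt_trans h1) // ltrDl ltr01.
Qed.
Lemma bound_cont : (exists C : R, forall x, `|f x| <= C * `|x|) -> continuous f.
Proof.
move=> [C HC]; apply/(linear_bounded_continuous fL)/linear_boundedP.
exists C; split; first exact: num_real.
move=> r Cr x; apply: le_trans (HC x) _; apply: ler_wpM2r => //; exact: ltW.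
Qed.
Lemma lin0 : f 0 = 0.
Proof. exact: (linear0 fL). Qed.
Lemma linD u v : f (u + v) = f u + f v.
Proof. exact: (linearD fL). Qed.
Lemma linZ (a : R) u : f (a *: u) = a *: f u.
Proof. by have := hf a u 0; rewrite addr0 => ->; rewrite lin0 addr0. Qed.
End LB.

Lemma faddE (R : realType) (X : normedModType R) (f g : nat -> X) n : (f + g) n = f n + g n.
Proof. by []. Qed.
Lemma fscaleE (R : realType) (X : normedModType R) (a : R) (f : nat -> X) n : (a *: f) n = a *: f n.
Proof. by []. Qed.
Lemma foppE (R : realType) (X : normedModType R) (f : nat -> X) n : (- f) n = - f n.
Proof. by []. Qed.
Lemma fzeroE (R : realType) (X : normedModType R) n : (0 : nat -> X) n = 0.
Proof. by []. Qed.

Section Ops.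
Variables (R : realType) (p : R) (X Y : normedModType R).
Variables (V : X -> (X * X)%type) (W : (X * X)%type -> X).
Hypotheses (hV : is_linear V) (cV : continuous V) (cW : continuous W)
  (VK : cancel V W) (WK : cancel W V).

Lemma hW : is_linear W.
Proof.
move=> a u v; apply: (can_inj VK).
by rewrite hV !WK.
Qed.

Definition Uraw (z : seqE X Y) : seqE X Y :=
  (z.1, fun n => if n is 0%N then W (z.2 0%N, z.2 1%N) else z.2 n.+1).
Definition Vraw (z : seqE X Y) : seqE X Y :=
  (z.1, fun n => match n with 0%N => (V (z.2 0%N)).1 | 1%N => (V (z.2 0%N)).2
                  | n.+2 => z.2 n.+1 end).

Lemma UVK z : Uraw (Vraw z) = z.
Proof.
case: z => y x; rewrite /Uraw /Vraw /=; congr (_, _); apply: funext => -[|n] //=.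
by rewrite -surjective_pairing VK.
Qed.

Lemma VUK z : Vraw (Uraw z) = z.
Proof.
case: z => y x; rewrite /Uraw /Vraw /=; congr (_, _); apply: funext => -[|[|n]] //=;
by rewrite WK.
Qed.

Lemma UrawD z w : Uraw (z + w) = Uraw z + Uraw w.
Proof.
rewrite /Uraw /=; congr (_, _); apply: funext => -[|n]; rewrite !faddE //=.
by rewrite -(linD hW).
Qed.

Lemma UrawZ (a : R) z : Uraw (a *: z) = a *: Uraw z.
Proof.
rewrite /Uraw /=; congr (_, _); apply: funext => -[|n]; rewrite !fscaleE //=.
by rewrite -(linZ hW).
Qed.

Lemma VrawD z w : Vraw (z + w) = Vraw z + Vraw w.
Proof.
rewrite /Vraw /=; congr (_, _); apply: funext => -[|[|n]]; rewrite !faddE //=;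
by rewrite (linD hV).
Qed.

Lemma VrawZ (a : R) z : Vraw (a *: z) = a *: Vraw z.
Proof.
rewrite /Vraw /=; congr (_, _); apply: funext => -[|[|n]]; rewrite !fscaleE //=;
by rewrite (linZ hV).
Qed.

End Ops.

Section Bounds.
Variables (R : realType) (p : R) (X Y : normedModType R).
Variables (V : X -> (X * X)%type) (W : (X * X)%type -> X).
Hypotheses (hp : 1 < p) (hV : is_linear V) (cV : continuous V) (cW : continuous W)
  (VK : cancel V W) (WK : cancel W V).

Lemma p_ge0 : 0 <= p.
Proof. exact: le_trans ler01 (ltW hp). Qed.

Lemma powR_max (a b : R) : 0 <= a -> 0 <= b ->
  (Num.max a b) `^ p <= a `^ p + b `^ p.
Proof.
move=> a0 b0; rewrite maxEle; have h1 := powR_ge0 a p; have h2 := powR_ge0 b p.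
by case: ifP => _; lra.
Qed.

Lemma le_Kx (K : R) (x : \bar R) : 1 <= K -> (0 <= x)%E -> (x <= K%:E * x)%E.
Proof.
move=> K1; case: x => [r||] //; rewrite ?lee_fin => r0.
  by nra.
by rewrite mulry gtr0_sg ?mul1e //; lra.
Qed.

Lemma powR_mul_le (C a b : R) : 0 <= C -> 0 <= a -> 0 <= b -> a <= C * b ->
  a `^ p <= C `^ p * b `^ p.
Proof.
move=> C0 a0 b0 ab; rewrite -powRM //.
apply: ge0_ler_powR => //; [exact: p_ge0 | by rewrite nnegrE mulr_ge0].
Qed.

Lemma lpsumU : exists K : R, 0 < K /\
  forall z : seqE X Y, (lpsum p (Uraw W z) <= K%:E * lpsum p z)%E.
Proof.
have [C [C0 HC]] := lin_bound_aux (hW hV VK WK) cW.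
exists (1 + C `^ p); split; first by have := powR_ge0 C p; lra.
have K1 : 1 <= 1 + C `^ p by have := powR_ge0 C p; lra.
move=> [y x]; rewrite /lpsum /=.
rewrite eser_rec; last by move=> i; exact: ep_ge0.
rewrite [in X in (_ <= X)%E]eser_rec; last by move=> i; exact: ep_ge0.
rewrite [in X in (_ <= X)%E]eser_rec /=; last by move=> i; exact: ep_ge0.
have S0 : (0 <= \sum_(k <oo) (`|x k.+2| `^ p)%:E)%E.
  by apply: nneseries_ge0 => n _ _; exact: ep_ge0.
rewrite !ge0_muleDr ?adde_ge0 ?ep_ge0 //.
apply: leeD; first by apply: le_Kx => //; exact: ep_ge0.
rewrite addeA; apply: leeD; last exact: le_Kx.
rewrite -!EFinM -EFinD lee_fin.
have h : `|W (x 0%N, x 1%N)| <= C * Num.max `|x 0%N| `|x 1%N|.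
  by have := HC (x 0%N, x 1%N); rewrite prod_normE.
have hm0 : 0 <= Num.max `|x 0%N| `|x 1%N| by rewrite le_max normr_ge0.
have := powR_mul_le (ltW C0) (normr_ge0 _) hm0 h.
have := powR_max (normr_ge0 (x 0%N)) (normr_ge0 (x 1%N)).
have := powR_ge0 C p; have := powR_ge0 (Num.max `|x 0%N| `|x 1%N|) p.
have := powR_ge0 `|x 0%N| p; have := powR_ge0 `|x 1%N| p.
nra.
Qed.

Lemma lpsumV : exists K : R, 0 < K /\
  forall z : seqE X Y, (lpsum p (Vraw V z) <= K%:E * lpsum p z)%E.
Proof.
have [C [C0 HC]] := lin_bound_aux hV cV.
exists (1 + C `^ p + C `^ p); split; first by have := powR_ge0 C p; lra.
have K1 : 1 <= 1 + C `^ p + C `^ p by have := powR_ge0 C p; lra.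
move=> [y x]; rewrite /lpsum /=.
rewrite eser_rec; last by move=> i; exact: ep_ge0.
rewrite eser_rec /=; last by move=> i; exact: ep_ge0.
rewrite [in X in (_ <= X)%E]eser_rec /=; last by move=> i; exact: ep_ge0.
have S0 : (0 <= \sum_(k <oo) (`|x k.+1| `^ p)%:E)%E.
  by apply: nneseries_ge0 => n _ _; exact: ep_ge0.
rewrite !ge0_muleDr ?adde_ge0 ?ep_ge0 //.
apply: leeD; first by apply: le_Kx => //; exact: ep_ge0.
rewrite addeA; apply: leeD; last exact: le_Kx.
rewrite -!EFinM -EFinD lee_fin.
have h1 : `|(V (x 0%N)).1| <= C * `|x 0%N|.
  apply: le_trans (HC _); rewrite prod_normE le_max lexx //.
have h2 : `|(V (x 0%N)).2| <= C * `|x 0%N|.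
  apply: le_trans (HC _); rewrite prod_normE le_max lexx orbT //.
have := powR_mul_le (ltW C0) (normr_ge0 _) (normr_ge0 _) h1.
have := powR_mul_le (ltW C0) (normr_ge0 _) (normr_ge0 _) h2.
have := powR_ge0 C p; have := powR_ge0 `|x 0%N| p.
nra.
Qed.

End Bounds.

Section Lift.
Variables (R : realType) (p : R) (X Y : normedModType R).
Variables (F : seqE X Y -> seqE X Y) (K : R) (K0 : 0 < K).
Hypothesis hF : forall d : seqE X Y, (lpsum p (F d) <= K%:E * lpsum p d)%E.

Lemma inZ_F (z : seqE X Y) : inZ p z -> inZ p (F z).
Proof.
rewrite /inZ => hz; apply: le_lt_trans (hF z) _.
by apply: lte_mul_pinfty => //; rewrite lee_fin ltW.
Qed.

Definition lift (z : ZZ X Y p) : ZZ X Y p := exist _ (F (val z)) (inZ_F (valP z)).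

Lemma val_lift z : val (lift z) = F (val z).
Proof. by []. Qed.
End Lift.

Section Conj.
Variables (R : realType) (p : R) (X Y : normedModType R).
Hypothesis hp : 1 < p.
Variables (F G : seqE X Y -> seqE X Y) (KF KG : R) (KF0 : 0 < KF) (KG0 : 0 < KG).
Hypothesis hF : forall d : seqE X Y, (lpsum p (F d) <= KF%:E * lpsum p d)%E.
Hypothesis hG : forall d : seqE X Y, (lpsum p (G d) <= KG%:E * lpsum p d)%E.
Hypotheses (FD : forall z w, F (z + w) = F z + F w) (FZ : forall (a : R) z, F (a *: z) = a *: F z).
Hypotheses (GD : forall z w, G (z + w) = G z + G w) (GZ : forall (a : R) z, G (a *: z) = a *: G z).
Hypotheses (FG : forall z, F (G z) = z) (GF : forall z, G (F z) = z).

Definition conjF (S : zop X Y p) : zop X Y p := fun z => lift KF0 hF (S (lift KG0 hG z)).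
Definition conjG (S : zop X Y p) : zop X Y p := fun z => lift KG0 hG (S (lift KF0 hF z)).

Lemma LGF z : lift KG0 hG (lift KF0 hF z) = z.
Proof. by apply: val_inj; rewrite !val_lift GF. Qed.
Lemma LFG z : lift KF0 hF (lift KG0 hG z) = z.
Proof. by apply: val_inj; rewrite !val_lift FG. Qed.

Lemma conjGF S : conjG (conjF S) = S.
Proof. by apply: funext => z; rewrite /conjG /conjF LGF LGF. Qed.
Lemma conjFG S : conjF (conjG S) = S.
Proof. by apply: funext => z; rewrite /conjG /conjF LFG LFG. Qed.

Lemma conjF_comp S T : conjF (S \o T) = conjF S \o conjF T.
Proof. by apply: funext => z; rewrite /conjF /= LGF. Qed.

Lemma conjF_add (S T U : zop X Y p) :
  (forall z, val (U z) = val (S z) + val (T z)) ->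
  forall z, val (conjF U z) = val (conjF S z) + val (conjF T z).
Proof. by move=> h z; rewrite /conjF !val_lift h FD. Qed.

Lemma conjF_scale (a : R) (S U : zop X Y p) :
  (forall z, val (U z) = a *: val (S z)) ->
  forall z, val (conjF U z) = a *: val (conjF S z).
Proof. by move=> h z; rewrite /conjF !val_lift h FZ. Qed.

Lemma conjF_lin S : zlinear S -> zlinear (conjF S).
Proof.
move=> [SD SZ]; split.
- move=> z1 z2 z3 h; rewrite /conjF !val_lift -FD; congr F.
  by apply: SD; rewrite !val_lift h GD.
- move=> a z1 z2 h; rewrite /conjF !val_lift -FZ; congr F.
  by apply: SZ; rewrite !val_lift h GZ.
Qed.

Lemma FB z : F (z - G (F z) + G (F z)) = F z. 
Proof. by rewrite subrK. Qed.

Lemma F_sub z w : F (z - w) = F z - F w.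
Proof. by apply/eqP; rewrite eq_sym subr_eq -FD subrK. Qed.

Lemma nrmF d : nrm p (F d) <= KF `^ p^-1 * nrm p d.
Proof.
apply: nrm_bound => // Hoo; apply/eqP; rewrite eq_le leey /= leNgt; apply/negP => fin.
have := hG (F d); rewrite GF Hoo => h.
have : (KG%:E * lpsum p (F d) < +oo)%E.
  by apply: lte_mul_pinfty => //; rewrite lee_fin ltW.
by move=> /(le_lt_trans h); rewrite ltxx.
Qed.

Lemma nrmG d : nrm p (G d) <= KG `^ p^-1 * nrm p d.
Proof.
apply: nrm_bound => // Hoo; apply/eqP; rewrite eq_le leey /= leNgt; apply/negP => fin.
have := hF (G d); rewrite FG Hoo => h.
have : (KF%:E * lpsum p (G d) < +oo)%E.
  by apply: lte_mul_pinfty => //; rewrite lee_fin ltW.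
by move=> /(le_lt_trans h); rewrite ltxx.
Qed.

Definition CF := KF `^ p^-1 * KG `^ p^-1.

Lemma znormE (z : ZZ X Y p) : znorm z = nrm p (val z).
Proof. by []. Qed.

Lemma conjF_bound S c : zopbound S c -> zopbound (conjF S) (CF * c).
Proof.
move=> HS z.
have [c0|cn] := leP 0 c.
  rewrite !znormE /conjF val_lift.
  apply: le_trans (nrmF _) _.
  have h1 := HS (lift KG0 hG z); rewrite !znormE val_lift in h1.
  have h2 := nrmG (val z).
  have a0 : 0 <= KF `^ p^-1 := powR_ge0 _ _.
  have b0 : 0 <= KG `^ p^-1 := powR_ge0 _ _.
  have n0 := nrm_ge0 p (val z).
  apply: le_trans (ler_wpM2l a0 (le_trans h1 (ler_wpM2l c0 h2))) _.
  by rewrite /CF [c * _]mulrCA !mulrA lexx.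
have Z0 : forall w : ZZ X Y p, znorm w = 0.
  move=> w; have h := le_trans (nrm_ge0 p (val (S w))) (HS w).
  rewrite znormE nmulr_rge0 // in h.
  by apply/eqP; rewrite eq_le h nrm_ge0.
by rewrite !Z0 mulr0.
Qed.

Lemma conjF_bdd S : zbounded S -> zbounded (conjF S).
Proof. by move=> [c Hc]; exists (CF * c); exact: conjF_bound. Qed.

Lemma zdistE (z w : ZZ X Y p) : zdist z w = nrm p (val z - val w).
Proof. by []. Qed.

Lemma conjF_cpt S : zcompact S -> zcompact (conjF S).
Proof.
move=> HS u [M HM].
have hb : exists M', forall n, znorm (lift KG0 hG (u n)) <= M'.
  exists (KG `^ p^-1 * M) => n; rewrite znormE val_lift.
  have h := HM n; rewrite znormE in h.
  apply: le_trans (nrmG _) _; apply: ler_wpM2l => //; exact: powR_ge0.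
have [phi [w [hphi hcvg]]] := HS (fun n => lift KG0 hG (u n)) hb.
exists phi, (lift KF0 hF w); split; first exact: hphi.
have hle : forall n, zdist (conjF S (u (phi n))) (lift KF0 hF w) <=
    KF `^ p^-1 * zdist (S (lift KG0 hG (u (phi n)))) w.
  move=> n; rewrite !zdistE /conjF !val_lift -F_sub; exact: nrmF.
have h0 : forall n, 0 <= zdist (conjF S (u (phi n))) (lift KF0 hF w).
  move=> n; exact: powR_ge0.
have hc : KF `^ p^-1 * zdist (S (lift KG0 hG (u (phi n)))) w @[n --> \oo] --> 0.
  by rewrite -(mulr0 (KF `^ p^-1)); apply: cvgMl_tmp.
apply: (squeeze_cvgr _ (cvg_cst 0) hc).
by apply: nearW => n; rewrite h0 hle.
Qed.

Lemma conjF_KZ S : in_KZ S -> in_KZ (conjF S).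
Proof.
by case=> h1 h2 h3; split; [exact: conjF_lin | exact: conjF_bdd | exact: conjF_cpt].
Qed.

End Conj.

Section InA.
Variables (R : realType).

Lemma in_A_ext (E F : normedModType R) (T T' : E -> F) :
  (forall x, T x = T' x) -> in_A T -> in_A T'.
Proof. by move=> h; have -> : T = T' by apply: funext. Qed.

Lemma bdd_comp (E1 E2 F : normedModType R) (T : E2 -> F) (B : E1 -> E2) :
  bdd_op T -> bdd_op B -> bdd_op (T \o B).
Proof.
move=> [lT cT] [lB cB]; split.
- by move=> a u v /=; rewrite lB lT.
- by move=> x; apply: continuous_comp; [exact: cB | exact: cT].
Qed.

Lemma bdd_add (E F : normedModType R) (T1 T2 : E -> F) :
  bdd_op T1 -> bdd_op T2 -> bdd_op (fun x => T1 x + T2 x).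
Proof.
move=> [l1 c1] [l2 c2]; split.
- by move=> a u v; rewrite l1 l2 scalerDr addrACA.
- by move=> x; exact: (continuousD (c1 x) (c2 x)).
Qed.

Lemma in_A_comp (E1 E2 F : normedModType R) (T : E2 -> F) (B : E1 -> E2) :
  in_A T -> bdd_op B -> in_A (T \o B).
Proof.
move=> [bT HT] bB; split; first exact: bdd_comp.
move=> eps e0; have [C [C0 HC]] := lin_bound_aux bB.1 bB.2.
have [F0 [bF0 [[n [e He]] H0]]] := HT (eps / C) (divr_gt0 e0 C0).
exists (F0 \o B); split; first exact: bdd_comp.
split; first by exists n, e => x; exact: He (B x).
move=> x /=; apply: le_trans (H0 (B x)) _.
apply: le_trans (ler_wpM2l _ (HC x)) _; first by rewrite divr_ge0 // ltW.
by rewrite mulrA divfK ?gt_eqF.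
Qed.

Lemma in_A_add (E F : normedModType R) (T1 T2 : E -> F) :
  in_A T1 -> in_A T2 -> in_A (fun x => T1 x + T2 x).
Proof.
move=> [b1 H1] [b2 H2]; split; first exact: bdd_add.
move=> eps e0.
have e2 : 0 < eps / 2 by rewrite divr_gt0.
have [F1 [bF1 [[n1 [e1 He1]] K1]]] := H1 _ e2.
have [F2 [bF2 [[n2 [f2 He2]] K2]]] := H2 _ e2.
exists (fun x => F1 x + F2 x); split; first exact: bdd_add.
split.
- exists (n1 + n2)%N, (fun i => match fintype.split i with inl j => e1 j | inr j => f2 j end).
  move=> x; have [c1 hc1] := He1 x; have [c2 hc2] := He2 x.
  exists (fun i => match fintype.split i with inl j => c1 j | inr j => c2 j end).
  rewrite big_split_ord /= hc1 hc2.
  have sl : forall i : 'I_n1, fintype.split (lshift n2 i) = inl i :=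
    fun i => unsplitK (inl i).
  have sr : forall i : 'I_n2, fintype.split (rshift n1 i) = inr i :=
    fun i => unsplitK (inr i).
  by congr (_ + _); apply: eq_bigr => i _; rewrite ?sl ?sr.
- move=> x; rewrite opprD addrACA; apply: le_trans (ler_normD _ _) _.
  by rewrite (splitr eps) mulrDl lerD.
Qed.
End InA.

Section JJ.
Variables (R : realType) (p : R) (X Y : normedModType R).
Hypothesis hp : 1 < p.

Lemma p_neq0 : p != 0.
Proof. by rewrite gt_eqF // (lt_trans ltr01 hp). Qed.

Lemma Jraw_inZ k (x : X) : inZ p (Jraw Y k x).
Proof.
rewrite /inZ /lpsum /= normr0 powR0 ?p_neq0 // add0e.
rewrite (@nneseriesD1 R _ k.-1 xpredT) //.
rewrite eqxx eseries0 ?adde0 ?ltey //.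
by move=> i _ /andP[_ /negbTE ->]; rewrite normr0 powR0 ?p_neq0.
Qed.

Lemma J0raw_inZ (y : Y) : inZ p (J0raw X y).
Proof.
rewrite /inZ /lpsum /= eseries0 ?adde0 ?ltey //.
by move=> i _ _; rewrite normr0 powR0 ?p_neq0.
Qed.

Definition JZ k (x : X) : ZZ X Y p := exist _ (Jraw Y k x) (Jraw_inZ k x).
Definition J0Z (y : Y) : ZZ X Y p := exist _ (J0raw X y) (J0raw_inZ y).

Lemma P0SJ_E (S : zop X Y p) k x : P0SJ S k x = (val (S (JZ k x))).1.
Proof. by rewrite /P0SJ (insubT _ (Jraw_inZ k x)). Qed.

Lemma P0SJ0_E (S : zop X Y p) y : P0SJ0 S y = (val (S (J0Z y))).1.
Proof. by rewrite /P0SJ0 (insubT _ (J0raw_inZ y)). Qed.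
End JJ.

Lemma bdd_of (R : realType) (E F : normedModType R) (f : E -> F) :
  is_linear f -> (exists C : R, forall x, `|f x| <= C * `|x|) -> bdd_op f.
Proof. by move=> lf hb; split => //; exact: bound_cont. Qed.

Section ConjP.
Variables (R : realType) (p : R) (X Y : normedModType R).
Hypothesis hp : 1 < p.
Variables (F G : seqE X Y -> seqE X Y) (KF KG : R) (KF0 : 0 < KF) (KG0 : 0 < KG).
Hypothesis hF : forall d : seqE X Y, (lpsum p (F d) <= KF%:E * lpsum p d)%E.
Hypothesis hG : forall d : seqE X Y, (lpsum p (G d) <= KG%:E * lpsum p d)%E.
Hypothesis F1 : forall z, (F z).1 = z.1.

Lemma P0SJ0_conj (S : zop X Y p) : (forall y, G (J0raw X y) = J0raw X y) ->
  forall y, P0SJ0 (conjF KF0 KG0 hF hG S) y = P0SJ0 S y.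
Proof.
move=> hJ y; rewrite !(P0SJ0_E hp) /conjF val_lift F1.
by congr (val (S _)).1; apply: val_inj; rewrite val_lift hJ.
Qed.

Lemma P0SJ_conj1 (S : zop X Y p) k x k' x' : G (Jraw Y k x) = Jraw Y k' x' ->
  P0SJ (conjF KF0 KG0 hF hG S) k x = P0SJ S k' x'.
Proof.
move=> hJ; rewrite !(P0SJ_E hp) /conjF val_lift F1.
by congr (val (S _)).1; apply: val_inj; rewrite val_lift hJ.
Qed.

Lemma P0SJ_conj2 (S : zop X Y p) k x k1 x1 k2 x2 : zlinear S ->
  G (Jraw Y k x) = Jraw Y k1 x1 + Jraw Y k2 x2 ->
  P0SJ (conjF KF0 KG0 hF hG S) k x = P0SJ S k1 x1 + P0SJ S k2 x2.
Proof.
move=> [SD _] hJ; rewrite !(P0SJ_E hp) /conjF val_lift F1.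
by rewrite (SD (@JZ _ _ X Y hp k1 x1) (@JZ _ _ X Y hp k2 x2)) // val_lift hJ.
Qed.
End ConjP.

Section Spec.
Variables (R : realType) (X Y : normedModType R).
Variables (V : X -> (X * X)%type) (W : (X * X)%type -> X).
Hypotheses (hV : is_linear V) (cV : continuous V) (cW : continuous W)
  (VK : cancel V W) (WK : cancel W V).

Let hW := hW hV VK WK.

Lemma V0 : V 0 = 0. Proof. exact: lin0 hV. Qed.
Lemma W0 : W 0 = 0. Proof. exact: lin0 hW. Qed.

Lemma VJ0 (y : Y) : Vraw V (J0raw X y) = J0raw X y.
Proof.
rewrite /Vraw /J0raw /=; congr (_, _); apply: funext => -[|[|n]] //=; by rewrite V0.
Qed.

Lemma UJ0 (y : Y) : Uraw W (J0raw X y) = J0raw X y.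
Proof.
rewrite /Uraw /J0raw /=; congr (_, _); apply: funext => -[|n] //=.
exact: W0.
Qed.

Lemma VJ1 (x : X) : Vraw V (Jraw Y 1 x) = Jraw Y 1 (V x).1 + Jraw Y 2 (V x).2.
Proof.
rewrite /Vraw /Jraw /=; congr (_, _); first by rewrite addr0.
by apply: funext => -[|[|n]]; rewrite faddE /= ?addr0 ?add0r.
Qed.

Lemma VJk k (x : X) : (2 <= k)%N -> Vraw V (Jraw Y k x) = Jraw Y k.+1 x.
Proof.
move=> k2; rewrite /Vraw /Jraw /=; congr (_, _).
apply: funext => -[|[|n]] /=.
- by rewrite (_ : (0 == k.-1) = false) ?V0 //; case: k k2 => [|[|k]].
- by rewrite (_ : (0 == k.-1) = false) ?V0 //; case: k k2 => [|[|k]].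
- by case: k k2 => [|[|k]].
Qed.

Lemma UJ1 (x : X) : Uraw W (Jraw Y 1 x) = Jraw Y 1 (W (x, 0)).
Proof.
rewrite /Uraw /Jraw /=; congr (_, _); by apply: funext => -[|n].
Qed.

Lemma UJ2 (x : X) : Uraw W (Jraw Y 2 x) = Jraw Y 1 (W (0, x)).
Proof.
rewrite /Uraw /Jraw /=; congr (_, _); by apply: funext => -[|n].
Qed.

Lemma UJk k (x : X) : (3 <= k)%N -> Uraw W (Jraw Y k x) = Jraw Y k.-1 x.
Proof.
move=> k3; rewrite /Uraw /Jraw /=; congr (_, _).
apply: funext => -[|n] /=.
- case: k k3 => [|[|[|k]]] // _ /=; exact: W0.
- by case: k k3 => [|[|[|k]]].
Qed.

Lemma bdd_V1 : bdd_op (fun x => (V x).1).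
Proof.
apply: bdd_of; first by move=> a u v; rewrite hV.
have [C [C0 HC]] := lin_bound_aux hV cV.
exists C => x; apply: le_trans (HC x); rewrite prod_normE le_max lexx //.
Qed.

Lemma bdd_V2 : bdd_op (fun x => (V x).2).
Proof.
apply: bdd_of; first by move=> a u v; rewrite hV.
have [C [C0 HC]] := lin_bound_aux hV cV.
exists C => x; apply: le_trans (HC x); rewrite prod_normE le_max lexx orbT //.
Qed.

Lemma bdd_W1 : bdd_op (fun x => W (x, 0)).
Proof.
apply: bdd_of.
  move=> a u v; rewrite -hW; congr W; apply: injective_projections => /=; by rewrite ?scaler0 ?addr0.
have [C [C0 HC]] := lin_bound_aux hW cW.
exists C => x; apply: le_trans (HC _) _; rewrite prod_normE /= normr0.
by rewrite (_ : Num.max `|x| 0 = `|x|) // maxEle; case: ifP => //; rewrite normr_le0 => /eqP ->; rewrite normr0.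
Qed.

Lemma bdd_W2 : bdd_op (fun x => W (0, x)).
Proof.
apply: bdd_of.
  move=> a u v; rewrite -hW; congr W; apply: injective_projections => /=; by rewrite ?scaler0 ?addr0.
have [C [C0 HC]] := lin_bound_aux hW cW.
exists C => x; apply: le_trans (HC _) _; rewrite prod_normE /= normr0.
by rewrite (_ : Num.max 0 `|x| = `|x|) // maxEle normr_ge0.
Qed.
End Spec.

Lemma iso_step (R : realType) (p : R) (X Y : normedModType R)
  (V : X -> (X * X)%type) (W : (X * X)%type -> X)
  (hV : is_linear V) (cV : continuous V) (cW : continuous W)
  (VK : cancel V W) (WK : cancel W V) (hp : 1 < p) (A A' : set nat) :
  (forall k, A' k -> (1 <= k)%N) ->
  (A' 1%N -> A 1%N /\ A 2%N) ->
  (forall k, (2 <= k)%N -> A' k -> A k.+1) ->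
  (A 1%N -> A' 1%N) -> (A 2%N -> A' 1%N) ->
  (forall k, (3 <= k)%N -> A k -> A' k.-1) ->
  (forall k, A k -> (1 <= k)%N) ->
  banach_alg_isomorphic (in_I (X := X) (Y := Y) (p := p) A) (in_I (X := X) (Y := Y) (p := p) A') /\
  banach_alg_isomorphic (in_I (X := X) (Y := Y) (p := p) A') (in_I (X := X) (Y := Y) (p := p) A).
Proof.
move=> hA'pos h1 hk h1' h2' hk' hApos.
have [KU [KU0 hU]] := lpsumU Y hp hV cW VK WK.
have [KV [KV0 hVb]] := lpsumV Y hp hV cV.
have UD := UrawD (Y := Y) hV VK WK.
have UZ := UrawZ (Y := Y) hV VK WK.
have VD := VrawD (Y := Y) hV.
have VZ := VrawZ (Y := Y) hV.
have UV := UVK (Y := Y) VK.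
have VU := VUK (Y := Y) WK.
have P1 : forall S, in_I A S -> in_I A' (conjF KU0 KV0 hU hVb S).
  move=> S [KS AS0 AS]; have [SL _ _] := KS; split.
  - exact: (conjF_KZ hp KU0 KV0 hU hVb UD UZ VD VZ UV VU KS).
  - apply: in_A_ext AS0 => y.
    by rewrite (P0SJ0_conj hp KU0 KV0 hU hVb (fun z => erefl) S (VJ0 hV)).
  - move=> k hk1; have k1 := hA'pos k hk1.
    case: k hk1 k1 => [|[|k]] // hk1 _.
    + have [a1 a2] := h1 hk1.
      apply: in_A_ext (in_A_add (in_A_comp (AS 1%N a1) (bdd_V1 hV cV))
                                (in_A_comp (AS 2%N a2) (bdd_V2 hV cV))) => x /=.
      by rewrite (P0SJ_conj2 hp KU0 KV0 hU hVb (fun z => erefl) SL (VJ1 Y V x)).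
    + apply: in_A_ext (AS k.+3 (hk k.+2 erefl hk1)) => x.
      by rewrite (P0SJ_conj1 hp KU0 KV0 hU hVb (fun z => erefl) S (VJk Y hV (k:=k.+2) x erefl)).
have P2 : forall T, in_I A' T -> in_I A (conjF KV0 KU0 hVb hU T).
  move=> T [KT AT0 AT]; split.
  - exact: (conjF_KZ hp KV0 KU0 hVb hU VD VZ UD UZ VU UV KT).
  - apply: in_A_ext AT0 => y.
    by rewrite (P0SJ0_conj hp KV0 KU0 hVb hU (fun z => erefl) T (UJ0 hV VK WK)).
  - move=> k hk1; have k1 := hApos k hk1.
    case: k hk1 k1 => [|[|[|k]]] // hk1 _.
    + apply: in_A_ext (in_A_comp (AT 1%N (h1' hk1)) (bdd_W1 hV cW VK WK)) => x /=.
      by rewrite (P0SJ_conj1 hp KV0 KU0 hVb hU (fun z => erefl) T (UJ1 Y W x)).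
    + apply: in_A_ext (in_A_comp (AT 1%N (h2' hk1)) (bdd_W2 hV cW VK WK)) => x /=.
      by rewrite (P0SJ_conj1 hp KV0 KU0 hVb hU (fun z => erefl) T (UJ2 Y W x)).
    + apply: in_A_ext (AT k.+2 (hk' k.+3 erefl hk1)) => x.
      by rewrite (P0SJ_conj1 hp KV0 KU0 hVb hU (fun z => erefl) T (UJk Y hV VK WK (k:=k.+3) x erefl)).
split.
exists (conjF KU0 KV0 hU hVb), (conjF KV0 KU0 hVb hU).
split; first exact: P1.
split; first exact: P2.
split; first by move=> S _; exact: (conjGF KU0 KV0 hU hVb VU S).
split; first by move=> T _; exact: (conjGF KV0 KU0 hVb hU UV T).
split; first by move=> S T U _ _ _ h; exact: (conjF_add KU0 KV0 hU hVb UD h).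
split; first by move=> a S U _ _ h; exact: (conjF_scale KU0 KV0 hU hVb UZ h).
split; first by move=> S T _ _; exact: (conjF_comp KU0 KV0 hU hVb VU S T).
split; first by exists (CF p KU KV) => S c _ hS; exact: (conjF_bound hp KU0 KV0 hU hVb UV VU hS).
by exists (CF p KV KU) => T c _ hT; exact: (conjF_bound hp KV0 KU0 hVb hU VU UV hT).
exists (conjF KV0 KU0 hVb hU), (conjF KU0 KV0 hU hVb).
split; first exact: P2.
split; first exact: P1.
split; first by move=> T _; exact: (conjGF KV0 KU0 hVb hU UV T).
split; first by move=> S _; exact: (conjGF KU0 KV0 hU hVb VU S).
split; first by move=> S T U _ _ _ h; exact: (conjF_add KV0 KU0 hVb hU VD h).
split; first by move=> a S U _ _ h; exact: (conjF_scale KV0 KU0 hVb hU VZ h).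
split; first by move=> S T _ _; exact: (conjF_comp KV0 KU0 hVb hU UV S T).
split; first by exists (CF p KV KU) => T c _ hT; exact: (conjF_bound hp KV0 KU0 hVb hU VU UV hT).
by exists (CF p KU KV) => S c _ hS; exact: (conjF_bound hp KU0 KV0 hU hVb UV VU hS).
Qed.

Lemma iso_refl (R : realType) (X Y : normedModType R) (p : R) (I : set (zop X Y p)) :
  banach_alg_isomorphic I I.
Proof.
exists id, id.
do 4 (split; first by []).
split; first by move=> S T U _ _ _ h.
split; first by move=> a S U _ _ h.
split; first by [].
by split; exists 1 => S c _ h; rewrite mul1r.
Qed.

Lemma iso_trans (R : realType) (X Y : normedModType R) (p : R) (I1 I2 I3 : set (zop X Y p)) :
  banach_alg_isomorphic I1 I2 -> banach_alg_isomorphic I2 I3 ->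
  banach_alg_isomorphic I1 I3.
Proof.
move=> [P1 [Q1 [a1 [b1 [c1 [d1 [e1 [f1 [g1 [[C1 h1] [D1 i1]]]]]]]]]]].
move=> [P2 [Q2 [a2 [b2 [c2 [d2 [e2 [f2 [g2 [[C2 h2] [D2 i2]]]]]]]]]]].
exists (P2 \o P1), (Q1 \o Q2).
split; first by move=> S hS; apply: a2; apply: a1.
split; first by move=> T hT; apply: b1; apply: b2.
split; first by move=> S hS /=; rewrite c2 ?c1 //; apply: a1.
split; first by move=> T hT /=; rewrite d1 ?d2 //; apply: b2.
split.
  move=> S T U hS hT hU h z /=; apply: e2; try apply: a1 => //.
  exact: e1.
split.
  move=> a S U hS hU h z /=; apply: f2; try apply: a1 => //.
  exact: f1.
split; first by move=> S T hS hT /=; rewrite g1 // g2 //; apply: a1.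
split.
  exists (C2 * C1) => S c hS hc /=; rewrite -mulrA; apply: h2; first exact: a1.
  exact: h1.
exists (D1 * D2) => T c hT hc /=; rewrite -mulrA; apply: i1; first exact: b2.
exact: i2.
Qed.

Unset Implicit Arguments.

Theorem lemma2p3 (R : realType) (p : R) (X Y : completeNormedModType R) :
  1 < p ->
  approx_prop X ->
  (forall T : X -> Y, in_A T -> in_K T) ->
  (exists T : X -> Y, in_K T /\ ~ in_A T) ->
  (exists (V : X -> (X * X)%type) (W : (X * X)%type -> X),
      is_linear V /\ continuous V /\ continuous W /\ cancel V W /\ cancel W V) ->
  forall r s : nat, (0 < r)%N -> (0 < s)%N ->
    banach_alg_isomorphic (p := p)
      (in_I (X := X) (Y := Y) (p := p) [set k | (1 <= k <= r)%N])
      (in_I (X := X) (Y := Y) (p := p) [set k | (1 <= k <= s)%N]) /\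
    banach_alg_isomorphic (p := p)
      (in_I (X := X) (Y := Y) (p := p) [set k | (r < k)%N])
      (in_I (X := X) (Y := Y) (p := p) [set k | (s < k)%N]).
Proof.
move=> hp _ _ _ [V [W [hV [cV [cW [VK WK]]]]]] r s r0 s0.
have stepA (n : nat) : (0 < n)%N ->
  banach_alg_isomorphic (p := p)
      (in_I (X := X) (Y := Y) (p := p) [set k | (1 <= k <= n.+1)%N])
      (in_I (X := X) (Y := Y) (p := p) [set k | (1 <= k <= n)%N]) /\
  banach_alg_isomorphic (p := p)
      (in_I (X := X) (Y := Y) (p := p) [set k | (1 <= k <= n)%N])
      (in_I (X := X) (Y := Y) (p := p) [set k | (1 <= k <= n.+1)%N]).
  move=> n0; apply: (@iso_step R p X Y V W hV cV cW VK WK hp).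
  - by move=> k /=; lia.
  - by move=> /= h; split; lia.
  - by move=> k /=; lia.
  - by move=> /=; lia.
  - by move=> /=; lia.
  - by move=> k /=; lia.
  - by move=> k /=; lia.
have stepB (n : nat) : (0 < n)%N ->
  banach_alg_isomorphic (p := p)
      (in_I (X := X) (Y := Y) (p := p) [set k | (n.+1 < k)%N])
      (in_I (X := X) (Y := Y) (p := p) [set k | (n < k)%N]) /\
  banach_alg_isomorphic (p := p)
      (in_I (X := X) (Y := Y) (p := p) [set k | (n < k)%N])
      (in_I (X := X) (Y := Y) (p := p) [set k | (n.+1 < k)%N]).
  move=> n0; apply: (@iso_step R p X Y V W hV cV cW VK WK hp).
  - by move=> k /=; lia.
  - by move=> /= h; split; lia.
  - by move=> k /=; lia.
  - by move=> /=; lia.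
  - by move=> /=; lia.
  - by move=> k /=; lia.
  - by move=> k /=; lia.
have chA (n : nat) :
  banach_alg_isomorphic (p := p)
      (in_I (X := X) (Y := Y) (p := p) [set k | (1 <= k <= n.+1)%N])
      (in_I (X := X) (Y := Y) (p := p) [set k | (1 <= k <= 1)%N]) /\
  banach_alg_isomorphic (p := p)
      (in_I (X := X) (Y := Y) (p := p) [set k | (1 <= k <= 1)%N])
      (in_I (X := X) (Y := Y) (p := p) [set k | (1 <= k <= n.+1)%N]).
  elim: n => [|n [ih1 ih2]]; first by split; apply: iso_refl.
  have [a b] := stepA n.+1 erefl.
  by split; [exact: iso_trans a ih1 | exact: iso_trans ih2 b].
have chB (n : nat) :
  banach_alg_isomorphic (p := p)
      (in_I (X := X) (Y := Y) (p := p) [set k | (n.+1 < k)%N])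
      (in_I (X := X) (Y := Y) (p := p) [set k | (1 < k)%N]) /\
  banach_alg_isomorphic (p := p)
      (in_I (X := X) (Y := Y) (p := p) [set k | (1 < k)%N])
      (in_I (X := X) (Y := Y) (p := p) [set k | (n.+1 < k)%N]).
  elim: n => [|n [ih1 ih2]]; first by split; apply: iso_refl.
  have [a b] := stepB n.+1 erefl.
  by split; [exact: iso_trans a ih1 | exact: iso_trans ih2 b].
case: r r0 => [|r] // _; case: s s0 => [|s] // _.
split.
- exact: iso_trans (chA r).1 (chA s).2.
- exact: iso_trans (chB r).1 (chB s).2.
Qed.
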